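(* Let $|\psi\rangle$ be an $n$-qubit pure state and $\Gamma=\frac1M\sum_{i=1}^M|\phi_i\rangle\langle\phi_i|$ where $|\phi_1\rangle,\dots,|\phi_M\rangle$ are orthonormal $n$-qubit states. Let $d\ge1$. If for every set $R$ of qubits with $|R|\le d$ we have $\|\psi_R-\Gamma_R\|_1<1$ and $$n\,H_2\!\left(\tfrac{\|\psi_R-\Gamma_R\|_1}{2}\right)<\log M,$$ then the all-to-all circuit complexity satisfies $\mathscr{C}(\psi)>\log d$.
   Context: $\mathscr{C}(\psi)$ is the minimum depth $l$ such that $|\psi\rangle=U_l\cdots U_1|0\rangle^{\otimes n}$ with each layer $U_i$ a tensor product of 2-qubit unitaries on disjoint pairs of qubits (any pairs allowed). Subscript $R$ denotes the reduced state on $R$. Logs base 2; $H_2(p)=-p\log p-(1-p)\log(1-p)$. *)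

(* Defs.v *)
From HB Require Import structures.
From mathcomp Require Import all_boot all_order all_algebra.
From mathcomp Require Import classical_sets reals ereal exp.
From mathcomp.real_closed Require Import complex.

Set Implicit Arguments.
Unset Strict Implicit.
Unset Printing Implicit Defensive.

Import Order.TTheory GRing.Theory Num.Theory.
Local Open Scope ring_scope.

Section Quantum.
Variable R : realType.
Local Notation C := (R[i]).

Definition adj (m p : nat) (A : 'M[C]_(m, p)) : 'M[C]_(p, m) :=
  map_mx Num.conj (A^T).

(* logarithm base 2 and binary entropy (ln 0 = 0, so 0 log 0 = 0) *)
Definition log2 (x : R) : R := ln x / ln 2.
Definition H2 (p : R) : R := - (p * log2 p) - (1 - p) * log2 (1 - p).

(* computational basis of n qubits : indices 'I_(2^n); the value of
   qubit k in basis state x is bit k of x *)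
Definition bitn (x k : nat) : bool := odd (x %/ 2 ^ k).
Definition qbit (n : nat) (x : 'I_(2 ^ n)) (k : 'I_n) : bool := bitn x k.

Definition unit_vector (n : nat) (v : 'cV[C]_(2 ^ n)) : Prop :=
  adj v *m v = 1%:M.

Definition proj (n : nat) (v : 'cV[C]_(2 ^ n)) : 'M[C]_(2 ^ n) := v *m adj v.

Definition Gamma (n M : nat) (phi : 'I_M -> 'cV[C]_(2 ^ n)) : 'M[C]_(2 ^ n) :=
  (M%:R)^-1 *: \sum_(i < M) proj (phi i).

Definition orthonormal_vecs (n M : nat) (phi : 'I_M -> 'cV[C]_(2 ^ n)) : Prop :=
  forall i j, adj (phi i) *m phi j = (i == j)%:R%:M.

(* Reduced state on the set S of qubits (partial trace over the complement).
   A basis index a of the 2^|S|-dimensional space assigns to the j-th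
   element (in increasing order) of S the bit j of a. *)
Definition agree_on (n : nat) (S : {set 'I_n}) (a : 'I_(2 ^ #|S|))
  (x : 'I_(2 ^ n)) : bool :=
  [forall k in S, qbit x k == bitn a (index k (enum S))].

Definition agree_off (n : nat) (S : {set 'I_n}) (x y : 'I_(2 ^ n)) : bool :=
  [forall k in ~: S, qbit x k == qbit y k].

Definition ptrace (n : nat) (S : {set 'I_n}) (rho : 'M[C]_(2 ^ n)) :
  'M[C]_(2 ^ #|S|) :=
  \matrix_(a, b) \sum_(x < 2 ^ n) \sum_(y < 2 ^ n)
     (if [&& agree_on a x, agree_on b y & agree_off S x y]
      then rho x y else 0).

(* trace norm ||A||_1 = tr sqrt(A^dagger A) = sum of singular values *)
Definition trnorm (m : nat) (A : 'M[C]_m) : R :=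
  complex.Re (\sum_(i < m) sqrtC (spectral_diag (adj A *m A) 0 i)).

(* circuits: a layer is a list of gates (i, j, U), U a 2-qubit unitary acting
   on the ordered pair of qubits (i, j); all involved qubits are distinct *)
Definition gate (n : nat) := (('I_n * 'I_n) * 'M[C]_4)%type.

Definition unitary (m : nat) (U : 'M[C]_m) : bool := U *m adj U == 1%:M.

Definition layer_qubits (n : nat) (L : seq (gate n)) : seq 'I_n :=
  flatten [seq [:: g.1.1; g.1.2] | g <- L].

Definition valid_layer (n : nat) (L : seq (gate n)) : bool :=
  uniq (layer_qubits L) && all (fun g => unitary g.2) L.

Definition pair_index (n : nat) (x : 'I_(2 ^ n)) (p : 'I_n * 'I_n) : 'I_4 :=
  inord (2 * qbit x p.1 + qbit x p.2).

Definition layer_mx (n : nat) (L : seq (gate n)) : 'M[C]_(2 ^ n) :=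
  \matrix_(x, y)
    ((\prod_(g <- L) g.2 (pair_index x g.1) (pair_index y g.1)) *
     (if [forall k, (k \notin layer_qubits L) ==> (qbit x k == qbit y k)]
      then 1 else 0)).

Definition zero_state (n : nat) : 'cV[C]_(2 ^ n) :=
  \col_i (if val i == 0%N then 1 else 0).

(* circuit c = [:: U_1; ...; U_l] prepares U_l ... U_1 |0...0> *)
Definition run (n : nat) (c : seq (seq (gate n))) : 'cV[C]_(2 ^ n) :=
  foldl (fun v L => layer_mx L *m v) (zero_state n) c.

Definition preparable_in (n : nat) (psi : 'cV[C]_(2 ^ n)) (l : nat) : Prop :=
  exists c : seq (seq (gate n)),
    [/\ size c = l, all (@valid_layer n) c & run c = psi].

(* all-to-all circuit complexity: minimum depth (+oo if none) *)
Definition complexity (n : nat) (psi : 'cV[C]_(2 ^ n)) : \bar R :=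
  ereal_inf [set (l%:R)%:E | l in [set l | preparable_in psi l]].

End Quantum.

(* Main.v *)
Require Import Defs.
From HB Require Import structures.
From mathcomp Require Import all_boot all_order all_algebra.
From mathcomp Require Import classical_sets reals ereal exp.
From mathcomp.real_closed Require Import complex.
From mathcomp Require Import zify ring lra boolp.

Import Order.TTheory GRing.Theory Num.Theory.
Local Open Scope ring_scope.

Set Implicit Arguments.
Unset Strict Implicit.
Unset Printing Implicit Defensive.

Lemma bitnS x k : bitn x k.+1 = bitn x./2 k.
Proof. by rewrite /bitn expnS divnMA divn2. Qed.

Lemma bitn0 x : bitn x 0 = odd x.
Proof. by rewrite /bitn expn0 divn1. Qed.

Lemma bitn_inj n x y : (x < 2 ^ n)%N -> (y < 2 ^ n)%N ->
  (forall k, (k < n)%N -> bitn x k = bitn y k) -> x = y.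
Proof.
elim: n x y => [|n IH] x y.
  by rewrite expn0 !ltnS !leqn0 => /eqP -> /eqP ->.
move=> hx hy h.
have ho : odd x = odd y by rewrite -!bitn0; apply: h.
have hh : x./2 = y./2.
  apply: IH.
  - by rewrite -divn2 ltn_divLR // -expnSr.
  - by rewrite -divn2 ltn_divLR // -expnSr.
  by move=> k hk; rewrite -!bitnS; apply: h.
by rewrite -[x]odd_double_half -[y]odd_double_half ho hh.
Qed.

Section Bits.
Variable n : nat.

Definition bits (x : 'I_(2 ^ n)) : {ffun 'I_n -> bool} := [ffun k => qbit x k].

Lemma bits_inj : injective bits.
Proof.
move=> x y /ffunP h; apply/val_inj/(@bitn_inj n); rewrite ?ltn_ord // => k hk.
by have := h (Ordinal hk); rewrite !ffunE.
Qed.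

Lemma card_bits : #|{ffun 'I_n -> bool}| = #|'I_(2 ^ n)|.
Proof. by rewrite card_ffun card_bool !card_ord. Qed.

Lemma bits_onto f : f \in codom bits.
Proof. by apply: inj_card_onto; [exact: bits_inj | rewrite card_bits]. Qed.

Definition unbits (f : {ffun 'I_n -> bool}) : 'I_(2 ^ n) := iinv (bits_onto f).

Lemma unbitsK : cancel unbits bits.
Proof. by move=> f; rewrite /unbits f_iinv. Qed.

Lemma bitsK : cancel bits unbits.
Proof. by move=> x; apply: bits_inj; rewrite unbitsK. Qed.

Lemma qbit_unbits f k : qbit (unbits f) k = f k.
Proof. by have := unbitsK f => /ffunP /(_ k); rewrite ffunE. Qed.

Lemma qbit_inj (x y : 'I_(2 ^ n)) : (forall k, qbit x k = qbit y k) -> x = y.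
Proof. by move=> h; apply: bits_inj; apply/ffunP => k; rewrite !ffunE. Qed.

End Bits.

Section Restr.
Variable n : nat.
Implicit Types S T : {set 'I_n}.

Definition restS S (x : 'I_(2 ^ n)) : 'I_(2 ^ #|S|) :=
  unbits [ffun j : 'I_#|S| => qbit x (enum_val j)].
Arguments restS : clear implicits.

Lemma index_enum_val S (j : 'I_#|S|) : index (enum_val j) (enum S) = j.
Proof.
rewrite (enum_val_nth (enum_val j)) index_uniq ?enum_uniq //.
by rewrite -cardE ltn_ord.
Qed.

Lemma index_lt S k : k \in S -> (index k (enum S) < #|S|)%N.
Proof. by move=> hk; rewrite cardE index_mem mem_enum. Qed.

Lemma enum_val_index S k (hk : k \in S) : enum_val (Ordinal (index_lt hk)) = k.
Proof. by rewrite (enum_val_nth k) /= nth_index ?mem_enum. Qed.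

Lemma bitn_restS S x k (hk : k \in S) :
  bitn (restS S x) (index k (enum S)) = qbit x k.
Proof.
have -> : bitn (restS S x) (index k (enum S)) =
          qbit (restS S x) (Ordinal (index_lt hk)) by [].
by rewrite qbit_unbits ffunE enum_val_index.
Qed.

Lemma restS_eq S x y :
  (restS S x == restS S y) = [forall k in S, qbit x k == qbit y k].
Proof.
apply/eqP/forall_inP => [h k hk | h].
  by rewrite -(bitn_restS x hk) h bitn_restS.
apply: (@bits_inj _); rewrite !unbitsK; apply/ffunP => j; rewrite !ffunE.
by apply/eqP/h/enum_valP.
Qed.

Lemma agree_onE S (a : 'I_(2 ^ #|S|)) x : agree_on a x = (a == restS S x).
Proof.
rewrite /agree_on; apply/forall_inP/eqP => [h | ->].
  apply: (@bits_inj _); rewrite unbitsK; apply/ffunP => j; rewrite !ffunE.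
  have hj := enum_valP j.
  by rewrite (eqP (h _ hj)) index_enum_val.
by move=> k hk; rewrite bitn_restS.
Qed.

Lemma offP S x y :
  reflect (forall k, k \notin S -> qbit x k = qbit y k) (agree_off S x y).
Proof.
apply: (iffP forall_inP) => h k hk.
  by apply/eqP/h; rewrite inE.
by apply/eqP/h; rewrite inE in hk.
Qed.

Lemma off_refl S x : agree_off S x x.
Proof. by apply/offP. Qed.

Lemma off_sym S x y : agree_off S x y = agree_off S y x.
Proof. by apply/offP/offP => h k hk; rewrite h. Qed.

Lemma off_trans S x y z : agree_off S x y -> agree_off S y z -> agree_off S x z.
Proof. by move=> /offP h1 /offP h2; apply/offP => k hk; rewrite h1 ?h2. Qed.

Lemma off_sub S T x y : S \subset T -> agree_off S x y -> agree_off T x y.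
Proof.
move=> sST /offP h; apply/offP => k hk; apply: h.
by move: hk; apply: contra; apply: (fintype.subsetP sST).
Qed.

Definition ext S (x : 'I_(2 ^ n)) (a : 'I_(2 ^ #|S|)) : 'I_(2 ^ n) :=
  unbits [ffun k => if k \in S then bitn a (index k (enum S)) else qbit x k].
Arguments ext : clear implicits.

Lemma restS_ext S x a : restS S (ext S x a) = a.
Proof.
apply: (@bits_inj _); rewrite unbitsK; apply/ffunP => j; rewrite !ffunE.
by rewrite qbit_unbits ffunE enum_valP index_enum_val.
Qed.

Lemma off_ext S x a : agree_off S x (ext S x a).
Proof.
by apply/offP => k hk; rewrite qbit_unbits ffunE (negbTE hk).
Qed.

Lemma ext_restS S x u : agree_off S x u -> ext S x (restS S u) = u.
Proof.
move=> /offP h; apply: qbit_inj => k; rewrite qbit_unbits ffunE.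
by case: ifP => hk; [rewrite bitn_restS | rewrite h ?hk].
Qed.

Lemma sum_off (V : nmodType) S x (G : 'I_(2 ^ n) -> V) :
  \sum_u (if agree_off S x u then G u else 0) = \sum_a G (ext S x a).
Proof.
rewrite -big_mkcond /=.
rewrite (reindex (ext S x)) /=; last first.
  exists (restS S) => [a _ | u]; first by rewrite restS_ext.
  by rewrite inE => h; rewrite ext_restS.
by apply: eq_bigl => a; rewrite off_ext.
Qed.

End Restr.
Arguments ext [n] S x a.

Lemma sum_eq1 (V : nmodType) (I : finType) (c : I) (F : I -> V) :
  \sum_i (if i == c then F i else 0) = F c.
Proof. by rewrite -big_mkcond big_pred1_eq. Qed.

Section Local.
Variable R : realType.
Local Notation C := (R[i]).
Variable n : nat.
Implicit Types S T : {set 'I_n}.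

Definition embed S (Q : 'M[C]_(2 ^ #|S|)) : 'M[C]_(2 ^ n) :=
  \matrix_(x, y) if agree_off S x y then Q (restS S x) (restS S y) else 0.
Arguments embed : clear implicits.

Definition local S (A : 'M[C]_(2 ^ n)) : Prop :=
  (forall x y, ~~ agree_off S x y -> A x y = 0) /\
  (forall x y x' y', agree_off S x y -> agree_off S x' y' ->
     restS S x = restS S x' -> restS S y = restS S y' -> A x y = A x' y').

Definition z0 : 'I_(2 ^ n) := unbits [ffun => false].

Definition block S (A : 'M[C]_(2 ^ n)) : 'M[C]_(2 ^ #|S|) :=
  \matrix_(a, b) A (ext S z0 a) (ext S z0 b).
Arguments block : clear implicits.

Lemma off_ext2 S x a b : agree_off S (ext S x a) (ext S x b).
Proof. by apply: (@off_trans _ _ _ x); [rewrite off_sym|]; apply: off_ext. Qed.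

Lemma local_embedE S A : local S A -> A = embed S (block S A).
Proof.
move=> [h1 h2]; apply/matrixP => x y; rewrite !mxE.
case: ifP => h; last by rewrite h1 ?h.
by apply: h2; rewrite ?off_ext2 ?restS_ext.
Qed.

Lemma embed_local S Q : local S (embed S Q).
Proof.
split=> [x y h | x y x' y' h h' hx hy]; rewrite !mxE; first by rewrite (negbTE h).
by rewrite h h' hx hy.
Qed.

Lemma block_embed S Q : block S (embed S Q) = Q.
Proof. by apply/matrixP => a b; rewrite !mxE off_ext2 !restS_ext. Qed.

Lemma embed_inj S : injective (embed S).
Proof. by move=> Q1 Q2 h; rewrite -(block_embed Q1) h block_embed. Qed.

Lemma embedM S Q1 Q2 : embed S Q1 *m embed S Q2 = embed S (Q1 *m Q2).
Proof.
apply/matrixP => x y; rewrite !mxE.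
transitivity (\sum_u (if agree_off S x u then
    Q1 (restS S x) (restS S u) *
    (if agree_off S u y then Q2 (restS S u) (restS S y) else 0) else 0)).
  by apply: eq_bigr => u _; rewrite !mxE; case: ifP; rewrite ?mul0r.
rewrite sum_off.
case: ifP => hxy.
  apply: eq_bigr => a _; rewrite restS_ext.
  by rewrite (@off_trans _ _ _ x) // off_sym off_ext.
rewrite big1 // => a _.
case: ifP; rewrite ?mulr0 // => h.
by move: hxy; rewrite (@off_trans _ _ _ (ext S x a)) // off_ext.
Qed.

Lemma adjE m p (A : 'M[C]_(m, p)) i j : adj A i j = (A j i)^*.
Proof. by rewrite /adj !mxE. Qed.

Lemma embed_adj S Q : adj (embed S Q) = embed S (adj Q).
Proof.
apply/matrixP => x y; rewrite /adj !mxE off_sym.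
by case: ifP; rewrite ?conjC0.
Qed.

Lemma embed1 S : embed S 1%:M = 1%:M.
Proof.
apply/matrixP => x y; rewrite !mxE.
have [<-|nxy] := eqVneq x y; first by rewrite off_refl eqxx.
case: ifP => // h; case: eqP => // e; case/eqP: nxy.
by rewrite -(ext_restS h) -e ext_restS // off_refl.
Qed.

Lemma local_sub S T A : S \subset T -> local S A -> local T A.
Proof.
move=> sST [h1 h2]; split=> [x y h | x y x' y' h h' hx hy].
  by apply: h1; apply: contra h; apply: off_sub.
have eqT u v : restS T u = restS T v -> forall k, k \in T -> qbit u k = qbit v k.
  by move=> e k hk; move/eqP: e; rewrite restS_eq => /forall_inP/(_ k hk)/eqP.
have eqS u v : (forall k, k \in S -> qbit u k = qbit v k) -> restS S u = restS S v.
  by move=> e; apply/eqP; rewrite restS_eq; apply/forall_inP => k hk; rewrite e.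
have offS : agree_off S x y = agree_off S x' y'.
  apply/idP/idP => /offP hS; apply/offP => k hk.
    have [kT|kT] := boolP (k \in T); last by apply: (offP _ _ _ h').
    by rewrite -(eqT _ _ hx) // -(eqT _ _ hy) // hS.
  have [kT|kT] := boolP (k \in T); last by apply: (offP _ _ _ h).
  by rewrite (eqT _ _ hx) // (eqT _ _ hy) // hS.
have [hS|hS] := boolP (agree_off S x y).
  apply: h2 => //; rewrite -?offS //; apply: eqS => k hk;
  by [apply: eqT hx k (fintype.subsetP sST k hk) | apply: eqT hy k (fintype.subsetP sST k hk)].
by rewrite !h1 // -offS.
Qed.

Lemma localM S A B : local S A -> local S B -> local S (A *m B).
Proof.
move=> /local_embedE -> /local_embedE ->; rewrite embedM; exact: embed_local.
Qed.

Lemma local_adj S A : local S A -> local S (adj A).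
Proof. by move=> /local_embedE ->; rewrite embed_adj; exact: embed_local. Qed.

End Local.
Arguments embed [R n] S Q.
Arguments block [R n] S A.

Lemma sum_if (V : nmodType) (I : finType) (c : bool) (F : I -> V) :
  \sum_i (if c then F i else 0) = if c then \sum_i F i else 0.
Proof. by case: c => //; rewrite big1. Qed.

Section Ptrace.
Variable R : realType.
Local Notation C := (R[i]).
Variable n : nat.
Implicit Types S T : {set 'I_n}.

Lemma tr_embed S (Q : 'M[C]_(2 ^ #|S|)) (rho : 'M[C]_(2 ^ n)) :
  \tr (embed S Q *m rho) = \tr (Q *m ptrace S rho).
Proof.
rewrite /mxtrace.
transitivity (\sum_x \sum_u (if agree_off S x u then
                 Q (restS S x) (restS S u) * rho u x else 0)).
  apply: eq_bigr => x _; rewrite mxE; apply: eq_bigr => u _.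
  by rewrite mxE; case: ifP; rewrite ?mul0r.
transitivity (\sum_a \sum_b \sum_u \sum_x
   (if [&& b == restS S u, a == restS S x & agree_off S u x]
    then Q a b * rho u x else 0)); last first.
  apply: eq_bigr => a _; rewrite mxE; apply: eq_bigr => b _.
  rewrite !mxE mulr_sumr; apply: eq_bigr => u _; rewrite mulr_sumr.
  apply: eq_bigr => x _; rewrite !agree_onE.
  by case: ifP; rewrite ?mulr0.
transitivity (\sum_x \sum_u \sum_a \sum_b
   (if [&& b == restS S u, a == restS S x & agree_off S u x]
    then Q a b * rho u x else 0)).
  apply: eq_bigr => x _; apply: eq_bigr => u _.
  transitivity (\sum_a (if a == restS S x then \sum_b
     (if b == restS S u then (if agree_off S u x then Q a b * rho u x else 0)
      else 0) else 0)); last first.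
    apply: eq_bigr => a _; rewrite -sum_if; apply: eq_bigr => b _.
    by case: (b == _); case: (a == _).
  by rewrite sum_eq1 sum_eq1 off_sym.
under eq_bigr => x _ do rewrite exchange_big.
under eq_bigr => x _ do under eq_bigr => a _ do rewrite exchange_big.
rewrite exchange_big.
under eq_bigr => a _ do rewrite exchange_big.
by under eq_bigr => a _ do under eq_bigr => b _ do rewrite exchange_big.
Qed.

Lemma ptraceB S (A B : 'M[C]_(2 ^ n)) :
  ptrace S (A - B) = ptrace S A - ptrace S B.
Proof.
apply/matrixP => a b; rewrite !mxE -sumrB; apply: eq_bigr => x _.
rewrite -sumrB; apply: eq_bigr => y _; rewrite !mxE.
by case: ifP; rewrite ?subr0.
Qed.

Lemma ptrace_adj S (A : 'M[C]_(2 ^ n)) : adj (ptrace S A) = ptrace S (adj A).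
Proof.
apply/matrixP => a b; rewrite /adj !mxE rmorph_sum /= exchange_big.
apply: eq_bigr => x _; rewrite rmorph_sum; apply: eq_bigr => y _ /=.
rewrite !mxE [agree_off S x y]off_sym; case: (agree_on a y); case: (agree_on b x);
by case: (agree_off S y x); rewrite /= ?conjC0.
Qed.

Lemma tr_ptrace S (A : 'M[C]_(2 ^ n)) : \tr (ptrace S A) = \tr A.
Proof.
by rewrite -[ptrace S A]mul1mx -tr_embed embed1 mul1mx.
Qed.

End Ptrace.

Section Disj.
Variable R : realType.
Local Notation C := (R[i]).
Variable n : nat.
Implicit Types S T : {set 'I_n}.

Definition mrg S (y x : 'I_(2 ^ n)) : 'I_(2 ^ n) :=
  unbits [ffun k => if k \in S then qbit y k else qbit x k].

Lemma qbit_mrg S y x k : qbit (mrg S y x) k = if k \in S then qbit y k else qbit x k.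
Proof. by rewrite qbit_unbits ffunE. Qed.

Lemma restS_eqP S x y :
  reflect (forall k, k \in S -> qbit x k = qbit y k) (restS S x == restS S y).
Proof.
rewrite restS_eq; apply: (iffP forall_inP) => h k hk; first by apply/eqP/h.
by apply/eqP/h.
Qed.

Lemma local0 S (A : 'M[C]_(2 ^ n)) x y : local S A -> A x y != 0 -> agree_off S x y.
Proof. by move=> [h1 _] nz; apply: contraR nz => h; rewrite h1. Qed.

Lemma mul_disj S1 S2 (A B : 'M[C]_(2 ^ n)) x y :
  local S1 A -> local S2 B -> (forall k, k \in S1 -> k \notin S2) ->
  (A *m B) x y = A x (mrg S1 y x) * B (mrg S1 y x) y.
Proof.
move=> hA hB dis; rewrite mxE (bigD1 (mrg S1 y x)) //= big1 ?addr0 // => u hu.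
have [e|nz1] := eqVneq (A x u) 0; first by rewrite e mul0r.
have [e|nz2] := eqVneq (B u y) 0; first by rewrite e mulr0.
case/eqP: hu; apply: qbit_inj => k; rewrite qbit_mrg.
have /offP h1 := local0 hA nz1; have /offP h2 := local0 hB nz2.
by case: ifP => hk; [rewrite h2 ?dis | rewrite h1 ?hk].
Qed.

Lemma commute_disj S1 S2 (A B : 'M[C]_(2 ^ n)) :
  local S1 A -> local S2 B -> (forall k, k \in S1 -> k \notin S2) ->
  A *m B = B *m A.
Proof.
move=> hA hB dis.
have dis' k : k \in S2 -> k \notin S1 by move=> h; apply: contraL h; apply: dis.
apply/matrixP => x y; rewrite (mul_disj _ _ hA hB dis) (mul_disj _ _ hB hA dis').
set u0 := mrg S1 y x; set v0 := mrg S2 y x.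
have [hxy|hxy] := boolP (agree_off (S1 :|: S2) x y); last first.
  have [k hk1 hk2] : exists2 k, k \notin S1 :|: S2 & qbit x k != qbit y k.
    apply/exists_inP; move: hxy; rewrite /agree_off negb_forall_in.
    by move/exists_inP => [k]; rewrite inE => h1 h2; apply/exists_inP; exists k.
  move: hk1; rewrite inE negb_or => /andP[k1 k2].
  rewrite (proj1 hB u0 y) ?mulr0; last first.
    by apply/negP => /offP /(_ k k2); rewrite qbit_mrg (negbTE k1); apply/eqP.
  rewrite (proj1 hA v0 y) ?mulr0 //.
  by apply/negP => /offP /(_ k k1); rewrite qbit_mrg (negbTE k2); apply/eqP.
have hoff k : k \notin S1 -> k \notin S2 -> qbit x k = qbit y k.
  by move=> h1 h2; apply: (offP _ _ _ hxy); rewrite inE negb_or h1.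
rewrite mulrC; congr (_ * _).
  apply: (proj2 hB).
  - apply/offP => k hk; rewrite qbit_mrg; case: ifP => // h1.
    by rewrite hoff ?h1.
  - by apply/offP => k hk; rewrite qbit_mrg (negbTE hk).
  - apply/eqP/restS_eqP => k hk; rewrite qbit_mrg.
    by rewrite (negbTE (dis' _ hk)).
  - by apply/eqP/restS_eqP => k hk; rewrite qbit_mrg hk.
apply: (proj2 hA).
- by apply/offP => k hk; rewrite qbit_mrg (negbTE hk).
- apply/offP => k hk; rewrite qbit_mrg; case: ifP => // h2.
  by rewrite hoff ?h2.
- apply/eqP/restS_eqP => k hk; rewrite qbit_mrg.
  by rewrite (negbTE (dis _ hk)).
- by apply/eqP/restS_eqP => k hk; rewrite qbit_mrg hk.
Qed.

End Disj.

Section Layers.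
Variable R : realType.
Local Notation C := (R[i]).
Variable n : nat.
Implicit Types S T : {set 'I_n}.
Implicit Types L : seq (gate R n).

Definition QL L : {set 'I_n} := [set k | k \in layer_qubits L].

Lemma lq_cons g L : layer_qubits (g :: L) = g.1.1 :: g.1.2 :: layer_qubits L.
Proof. by []. Qed.

Lemma lq_cat L1 L2 : layer_qubits (L1 ++ L2) = layer_qubits L1 ++ layer_qubits L2.
Proof. by rewrite /layer_qubits map_cat flatten_cat. Qed.

Lemma mem_lq g L : g \in L -> (g.1.1 \in layer_qubits L) && (g.1.2 \in layer_qubits L).
Proof.
elim: L => // h L IH; rewrite in_cons lq_cons !in_cons => /orP[/eqP->|/IH/andP[-> ->]].
  by rewrite !eqxx orbT.
by rewrite !orbT.
Qed.

Lemma layer_ind_off L (x y : 'I_(2 ^ n)) :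
  [forall k, (k \notin layer_qubits L) ==> (qbit x k == qbit y k)] =
  agree_off (QL L) x y.
Proof. by apply: eq_forallb => k; rewrite !inE. Qed.

Lemma pair_eq (x y : 'I_(2 ^ n)) (p : 'I_n * 'I_n) :
  qbit x p.1 = qbit y p.1 -> qbit x p.2 = qbit y p.2 ->
  pair_index x p = pair_index y p.
Proof. by rewrite /pair_index => -> ->. Qed.

Lemma layerE L x y : layer_mx L x y =
  if agree_off (QL L) x y then
    \prod_(g <- L) g.2 (pair_index x g.1) (pair_index y g.1) else 0.
Proof. by rewrite mxE layer_ind_off; case: ifP; rewrite ?mulr1 ?mulr0. Qed.

Lemma layer_local L : local (QL L) (layer_mx L).
Proof.
split=> [x y h | x y x' y' h h' hx hy]; rewrite !layerE ?(negbTE h) // h h'.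
apply: eq_big_seq => g /mem_lq /andP[h1 h2].
move/eqP/restS_eqP: hx => hx; move/eqP/restS_eqP: hy => hy.
by rewrite (@pair_eq x x') ?(@pair_eq y y') ?hx ?hy ?inE.
Qed.

Lemma layer_cat L1 L2 : (forall k, k \in QL L1 -> k \notin QL L2) ->
  layer_mx (L1 ++ L2) = layer_mx L1 *m layer_mx L2.
Proof.
move=> dis; apply/matrixP => x y.
rewrite (mul_disj _ _ (layer_local L1) (layer_local L2) dis).
set u0 := mrg (QL L1) y x.
have o1 : agree_off (QL L1) x u0.
  by apply/offP => k hk; rewrite qbit_mrg (negbTE hk).
have o2 : agree_off (QL (L1 ++ L2)) x y = agree_off (QL L2) u0 y.
  apply/offP/offP => h k hk.
    rewrite qbit_mrg; case: ifP => // h1; apply: h.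
    by rewrite !inE lq_cat mem_cat negb_or; rewrite !inE in h1 hk; rewrite h1.
  move: hk; rewrite !inE lq_cat mem_cat negb_or => /andP[k1 k2].
  by rewrite -h ?inE // qbit_mrg inE (negbTE k1).
rewrite !layerE o1 -o2 big_cat /=; case: ifP; rewrite ?mulr0 // => _.
congr (_ * _); apply: eq_big_seq => g /mem_lq /andP[h1 h2].
  apply: congr1; apply: pair_eq; rewrite qbit_mrg inE ?h1 ?h2 //.
congr (g.2 _ _); apply: pair_eq; rewrite qbit_mrg; case: ifP => // hk;
  by move: (dis _ hk); rewrite inE ?h1 ?h2.
Qed.

Lemma layer_nil : layer_mx ([::] : seq (gate R n)) = 1%:M.
Proof.
apply/matrixP => x y; rewrite layerE big_nil !mxE.
have [<-|nxy] := eqVneq x y; first by rewrite off_refl.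
case: ifP => // h; case/eqP: nxy; apply: qbit_inj => k.
by apply: (offP _ _ _ h); rewrite inE.
Qed.

Lemma adjM m p q (A : 'M[C]_(m, p)) (B : 'M[C]_(p, q)) :
  adj (A *m B) = adj B *m adj A.
Proof. by rewrite /adj trmx_mul map_mxM. Qed.

Lemma adjK m p (A : 'M[C]_(m, p)) : adj (adj A) = A.
Proof. by apply/matrixP => i j; rewrite !adjE conjCK. Qed.

End Layers.

Lemma bitn_pair1 (a b : bool) : bitn (2 * a + b) 1 = a.
Proof. by case: a; case: b. Qed.
Lemma bitn_pair0 (a b : bool) : bitn (2 * a + b) 0 = b.
Proof. by case: a; case: b. Qed.
Lemma pair_decomp (c : 'I_4) : (2 * bitn c 1 + bitn c 0)%N = c.
Proof. by case: c => [[|[|[|[|c]]]] hc]. Qed.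
Lemma pair_lt (a b : bool) : (2 * a + b < 4)%N.
Proof. by case: a; case: b. Qed.

Section Gate.
Variable R : realType.
Local Notation C := (R[i]).
Variable n : nat.
Variables (i j : 'I_n) (U : 'M[C]_4).
Hypothesis nij : i != j.
Let g : gate R n := ((i, j), U).
Let S := QL [:: g].

Lemma inS k : (k \in S) = (k == i) || (k == j).
Proof. by rewrite /S /QL inE lq_cons !in_cons in_nil orbF. Qed.

Lemma pair_val (x : 'I_(2 ^ n)) :
  (pair_index x (i, j) : nat) = (2 * qbit x i + qbit x j)%N.
Proof. by rewrite /pair_index inordK // pair_lt. Qed.

Definition e2 (x : 'I_(2 ^ n)) (c : 'I_4) : 'I_(2 ^ n) :=
  unbits [ffun k => if k == i then bitn c 1 else if k == j then bitn c 0
                    else qbit x k].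

Lemma qbit_e2i x c : qbit (e2 x c) i = bitn c 1.
Proof. by rewrite qbit_unbits ffunE eqxx. Qed.
Lemma qbit_e2j x c : qbit (e2 x c) j = bitn c 0.
Proof. by rewrite qbit_unbits ffunE eq_sym (negbTE nij) eqxx. Qed.

Lemma pair_e2 x c : pair_index (e2 x c) (i, j) = c.
Proof. by apply: ord_inj; rewrite pair_val qbit_e2i qbit_e2j pair_decomp. Qed.

Lemma off_e2 x c : agree_off S x (e2 x c).
Proof.
apply/offP => k; rewrite inS negb_or => /andP[k1 k2].
by rewrite qbit_unbits ffunE (negbTE k1) (negbTE k2).
Qed.

Lemma off_e2_eq y x c : agree_off S y (e2 x c) = agree_off S y x.
Proof.
apply/idP/idP => h.
  by apply: (off_trans h); rewrite off_sym off_e2.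
by apply: (off_trans h); apply: off_e2.
Qed.

Lemma e2_pair x u : agree_off S x u -> e2 x (pair_index u (i, j)) = u.
Proof.
move=> /offP h; apply: qbit_inj => k; rewrite qbit_unbits ffunE.
case: eqP => [->|ki]; first by rewrite pair_val bitn_pair1.
case: eqP => [->|kj]; first by rewrite pair_val bitn_pair0.
by apply: h; rewrite inS; apply/norP; split; apply/eqP.
Qed.

Lemma sum_off2 (V : nmodType) x (F : 'I_(2 ^ n) -> V) :
  \sum_u (if agree_off S x u then F u else 0) = \sum_c F (e2 x c).
Proof.
rewrite -big_mkcond /= (reindex (e2 x)) /=; last first.
  exists (fun u => pair_index u (i, j)) => [c _ | u]; first by rewrite pair_e2.
  by rewrite inE => h; rewrite e2_pair.
by apply: eq_bigl => c; rewrite off_e2.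
Qed.

Lemma pair_eqE x y : agree_off S x y ->
  (pair_index x (i, j) == pair_index y (i, j)) = (x == y).
Proof.
move=> /offP h; apply/eqP/eqP => [e|-> //].
have e' := congr1 val e; rewrite /= !pair_val in e'.
have ei : qbit x i = qbit y i.
  by move: (congr1 (fun m => bitn m 1) e'); rewrite /= !bitn_pair1.
have ej : qbit x j = qbit y j.
  by move: (congr1 (fun m => bitn m 0) e'); rewrite /= !bitn_pair0.
apply: qbit_inj => k.
case: (k =P i) => [->//|ki]; case: (k =P j) => [->//|kj].
by apply: h; rewrite inS; apply/norP; split; apply/eqP.
Qed.

Lemma gate_unitary : unitary U -> layer_mx [:: g] *m adj (layer_mx [:: g]) = 1%:M.
Proof.
move=> /eqP hU; apply/matrixP => x y; rewrite mxE.
transitivity (\sum_u (if agree_off S x u then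
    U (pair_index x (i, j)) (pair_index u (i, j)) *
    (if agree_off S y u then U (pair_index y (i, j)) (pair_index u (i, j)) else 0)^*
    else 0)).
  apply: eq_bigr => u _; rewrite adjE !layerE !big_seq1 /=.
  by case: ifP; rewrite ?mul0r.
rewrite sum_off2.
under eq_bigr => c _ do rewrite pair_e2 off_e2_eq.
rewrite mxE; have [hyx|hyx] := boolP (agree_off S y x).
  transitivity ((U *m adj U) (pair_index x (i, j)) (pair_index y (i, j))).
    by rewrite mxE; apply: eq_bigr => c _; rewrite adjE.
  by rewrite hU !mxE pair_eqE // off_sym.
rewrite big1 => [|c _]; last by rewrite conjC0 mulr0.
by case: eqP => // e; move: hyx; rewrite e off_refl.
Qed.

End Gate.

Section Cone.
Variable R : realType.
Local Notation C := (R[i]).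
Variable n : nat.
Implicit Types S T : {set 'I_n}.
Implicit Types L : seq (gate R n).
Implicit Types g : gate R n.

Lemma adj_one m : adj (1%:M : 'M[C]_m) = 1%:M.
Proof.
apply/matrixP => x y; rewrite adjE !mxE eq_sym.
by case: eqP; rewrite ?conjC0 ?conjC1.
Qed.

Lemma QL_cons g L k : (k \in QL (g :: L)) = [|| k == g.1.1, k == g.1.2 | k \in QL L].
Proof. by rewrite /QL inE lq_cons !in_cons inE. Qed.

Lemma QL_single g k : (k \in QL [:: g]) = (k == g.1.1) || (k == g.1.2).
Proof. by rewrite QL_cons inE orbF. Qed.

Lemma layer_cons g L : uniq (layer_qubits (g :: L)) ->
  layer_mx (g :: L) = layer_mx [:: g] *m layer_mx L.
Proof.
rewrite lq_cons /= !inE negb_or => /andP[/andP[_ h1] /andP[h2 _]].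
apply: (@layer_cat R n [:: g] L) => k; rewrite QL_single inE.
by case/orP => /eqP ->.
Qed.

Lemma valid_tail g L : valid_layer (g :: L) ->
  [/\ valid_layer L, unitary g.2 & uniq (layer_qubits (g :: L))].
Proof.
move=> hv; have hu : uniq (layer_qubits (g :: L)) by case/andP: hv.
move: hv; rewrite /valid_layer lq_cons /= => /andP[/andP[_ /andP[_ u]] /andP[hg ha]].
by split => //; rewrite u ha.
Qed.

Lemma layer_unitary L : valid_layer L -> layer_mx L *m adj (layer_mx L) = 1%:M.
Proof.
elim: L => [|g L IH]; first by rewrite layer_nil adj_one mulmx1.
move=> /valid_tail [hvL hg hu].
rewrite (layer_cons hu) adjM mulmxA -(mulmxA _ (layer_mx L)) IH //.
rewrite mulmx1; move: hu hg; case: g => [[i j] U] /=.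
move=> /andP[]; rewrite !inE negb_or => /andP[nij _] _ hg.
exact: gate_unitary.
Qed.

Lemma layer_unitary' L : valid_layer L -> adj (layer_mx L) *m layer_mx L = 1%:M.
Proof. by move=> /layer_unitary; apply: mulmx1C. Qed.

Fixpoint grow L T : {set 'I_n} :=
  if L is g :: L' then
    (if (g.1.1 \in T) || (g.1.2 \in T) then g.1.1 |: (g.1.2 |: grow L' T)
     else grow L' T)
  else T.

Lemma grow_sup L T : T \subset grow L T.
Proof.
elim: L => [|g L IH] /=; first exact: fintype.subxx.
case: ifP => // _; apply: (fintype.subset_trans IH).
by apply: (fintype.subset_trans _ (finset.subsetUr _ _)); apply: finset.subsetUr.
Qed.

Lemma grow_sub L T : grow L T \subset T :|: QL L.
Proof.
elim: L => [|g L IH] /=; first exact: finset.subsetUl.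
have sub : T :|: QL L \subset T :|: QL (g :: L).
  apply: finset.setUS; apply/fintype.subsetP => k; rewrite QL_cons => ->.
  by rewrite !orbT.
case: ifP => _; last exact: (fintype.subset_trans IH).
apply/fintype.subsetP => k /setU1P [->|/setU1P [->|h]].
- by rewrite finset.in_setU QL_cons eqxx !orbT.
- by rewrite finset.in_setU QL_cons eqxx !orbT.
by move/fintype.subsetP: (fintype.subset_trans IH sub); apply.
Qed.

Lemma light_step L T (A : 'M[C]_(2 ^ n)) : valid_layer L -> local T A ->
  local (grow L T) (layer_mx L *m A *m adj (layer_mx L)).
Proof.
elim: L => [|g L IH] hv hA /=.
  by rewrite layer_nil adj_one mul1mx mulmx1.
have [hvL hg hu] := valid_tail hv.
have hB := IH hvL hA.
set B := layer_mx L *m A *m adj (layer_mx L) in hB.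
have -> : layer_mx (g :: L) *m A *m adj (layer_mx (g :: L)) =
          layer_mx [:: g] *m B *m adj (layer_mx [:: g]).
  by rewrite (layer_cons hu) adjM /B !mulmxA.
have hG := layer_local [:: g].
case: ifP => htouch.
  set T' := g.1.1 |: (g.1.2 |: grow L T).
  have s1 : QL [:: g] \subset T'.
    by apply/fintype.subsetP => k; rewrite QL_single !inE => /orP[->|->]; rewrite ?orbT.
  have s2 : grow L T \subset T'.
    by apply: (fintype.subset_trans _ (finset.subsetUr _ _)); apply: finset.subsetUr.
  apply: localM; first apply: localM.
  - exact: local_sub s1 hG.
  - exact: local_sub s2 hB.
  by apply: local_adj; exact: local_sub s1 hG.
have dis k : k \in QL [:: g] -> k \notin grow L T.
  rewrite QL_single => hk; apply/negP => /(fintype.subsetP (grow_sub L T)).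
  rewrite inE => /orP[kT|kL].
    have : (g.1.1 \in T) || (g.1.2 \in T).
      by case/orP: hk => /eqP <-; rewrite kT ?orbT.
    by rewrite htouch.
  move: hu; rewrite lq_cons /= !inE negb_or => /andP[/andP[_ h1] /andP[h2 _]].
  by case/orP: hk => /eqP e; subst k; rewrite inE in kL; rewrite kL in h1 h2.
have hGG : layer_mx [:: g] *m adj (layer_mx [:: g]) = 1%:M.
  apply: layer_unitary; rewrite /valid_layer /= hg !andbT !inE.
  by move: hu; rewrite lq_cons /= !inE negb_or => /andP[/andP[]].
by rewrite (commute_disj hG hB dis) -mulmxA hGG mulmx1.
Qed.

End Cone.

Section Circ.
Variable R : realType.
Local Notation C := (R[i]).
Variable n : nat.
Implicit Types S T : {set 'I_n}.
Implicit Types L : seq (gate R n).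
Implicit Types g : gate R n.

Lemma grow_card L T : uniq (layer_qubits L) ->
  (#|grow L T| <= #|T| + #|T :&: QL L|)%N.
Proof.
elim: L => [|g L IH] hu; first exact: leq_addr.
move: (hu); rewrite lq_cons /= => /andP[h1 /andP[h2 h3]].
move: h1; rewrite inE negb_or => /andP[n12 n1].
have IH' := IH h3.
have sub : T :&: QL L \subset T :&: QL (g :: L).
  apply: finset.setIS; apply/fintype.subsetP => k; rewrite QL_cons => ->.
  by rewrite !orbT.
rewrite [grow _ _]/=; case: ifP => ht; last first.
  by apply: (leq_trans IH'); rewrite leq_add2l subset_leq_card.
set G := grow L T.
have hTG := grow_sup L T.
have step1 : (#|g.1.1 |: (g.1.2 |: G)| <= #|G| + 1)%N.
  rewrite cardsU1 (cardsU1 g.1.2).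
  case/orP: ht => h.
    have -> : (g.1.1 \notin g.1.2 |: G) = false.
      by rewrite finset.in_setU1 (fintype.subsetP hTG _ h) orbT.
    by rewrite add0n addnC leq_add2l leq_b1.
  have -> : (g.1.2 \notin G) = false by rewrite (fintype.subsetP hTG _ h).
  by rewrite add0n addnC leq_add2l leq_b1.
have step2 : (#|T :&: QL L| < #|T :&: QL (g :: L)|)%N.
  apply: proper_card; apply/properP; split => //.
  case/orP: ht => h; [exists g.1.1 | exists g.1.2];
    rewrite ?finset.in_setI ?h ?QL_cons ?eqxx ?orbT //= /QL inE;
    by [rewrite (negbTE n1) | rewrite (negbTE h2)].
apply: (leq_trans step1); rewrite addn1; apply: (leq_ltn_trans IH').
by rewrite ltn_add2l.
Qed.

Definition Wmx (c : seq (seq (gate R n))) : 'M[C]_(2 ^ n) :=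
  foldl (fun W L => layer_mx L *m W) 1%:M c.

Lemma Wmx_rcons c L : Wmx (rcons c L) = layer_mx L *m Wmx c.
Proof. by rewrite /Wmx foldl_rcons. Qed.

Lemma run_Wmx c : run c = Wmx c *m zero_state R n.
Proof.
rewrite /run /Wmx.
suff h : forall W0, foldl (fun v L => layer_mx L *m v) (W0 *m zero_state R n) c =
  foldl (fun W L => layer_mx L *m W) W0 c *m zero_state R n.
  by rewrite -h mul1mx.
elim: c => [|L c IH] W0 //=.
by rewrite mulmxA IH.
Qed.

Lemma Wmx_unitary c : all (@valid_layer R n) c -> Wmx c *m adj (Wmx c) = 1%:M.
Proof.
elim/last_ind: c => [|c L IH]; first by rewrite /Wmx /= adj_one mulmx1.
rewrite all_rcons => /andP[hL hc].
rewrite Wmx_rcons adjM mulmxA -(mulmxA _ (Wmx c)) IH // mulmx1.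
exact: layer_unitary.
Qed.

Lemma Wmx_unitary' c : all (@valid_layer R n) c -> adj (Wmx c) *m Wmx c = 1%:M.
Proof. by move=> /Wmx_unitary; apply: mulmx1C. Qed.

Lemma cone c T (A : 'M[C]_(2 ^ n)) : all (@valid_layer R n) c -> local T A ->
  exists T', local T' (Wmx c *m A *m adj (Wmx c)) /\
             (#|T'| <= 2 ^ size c * #|T|)%N.
Proof.
move=> hc hA; elim/last_ind: c hc => [|c L IH].
  by exists T; rewrite /Wmx /= adj_one mul1mx mulmx1 expn0 mul1n.
rewrite all_rcons => /andP[hL hc].
have [T1 [h1 h2]] := IH hc.
exists (grow L T1); split.
  rewrite Wmx_rcons.
  have -> : layer_mx L *m Wmx c *m A *m adj (layer_mx L *m Wmx c) =
    layer_mx L *m (Wmx c *m A *m adj (Wmx c)) *m adj (layer_mx L).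
    by rewrite adjM !mulmxA.
  exact: light_step.
have hu : uniq (layer_qubits L) by case/andP: hL.
have := grow_card T1 hu.
have := subset_leq_card (finset.subsetIl T1 (QL L)).
rewrite size_rcons expnS; lia.
Qed.

End Circ.

Section HProj.
Variable R : realType.
Local Notation C := (R[i]).

Definition hproj m (E : 'M[C]_m) := adj E = E /\ E *m E = E.

Lemma hproj1B m (E : 'M[C]_m) : hproj E -> hproj (1%:M - E).
Proof.
move=> [h1 h2]; split.
  apply/matrixP => i j; rewrite adjE !mxE rmorphB /= -adjE h1.
  by congr (_ - _); rewrite eq_sym; case: eqP; rewrite ?conjC0 ?conjC1.
by rewrite mulmxBl !mulmxBr h2 !mul1mx !mulmx1 subrr subr0.
Qed.

Lemma hproj_conj m (E V : 'M[C]_m) : adj V *m V = 1%:M -> hproj E ->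
  hproj (V *m E *m adj V).
Proof.
move=> hV [h1 h2]; split; first by rewrite !adjM adjK h1 mulmxA.
rewrite -!mulmxA (mulmxA (adj V)) hV mul1mx.
by rewrite !mulmxA -(mulmxA V E E) h2.
Qed.

Lemma hproj_diag_ge0 m (E : 'M[C]_m) i : hproj E -> 0 <= E i i.
Proof.
move=> [h1 h2]; rewrite -{1}h2 -{2}h1 mxE.
by apply: sumr_ge0 => j _; rewrite adjE mul_conjC_ge0.
Qed.

Lemma hproj_diag_le1 m (E : 'M[C]_m) i : hproj E -> E i i <= 1.
Proof.
move=> hE; have := hproj_diag_ge0 i (hproj1B hE).
by rewrite !mxE eqxx /= subr_ge0.
Qed.

End HProj.

Section Dk.
Variable R : realType.
Local Notation C := (R[i]).
Variable n : nat.

Definition Dk (k : 'I_n) : 'M[C]_(2 ^ n) :=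
  \matrix_(x, y) ((x == y) && qbit x k)%:R.

Lemma off1_eq k (x y : 'I_(2 ^ n)) : agree_off [set k] x y ->
  (x == y) = (qbit x k == qbit y k).
Proof.
move=> /offP h; apply/eqP/eqP => [-> //|e].
apply: qbit_inj => k'; case: (k' =P k) => [-> //|ne].
by apply: h; rewrite inE; apply/eqP.
Qed.

Lemma Dk_local k : local [set k] (Dk k).
Proof.
split=> [x y h | x y x' y' h h' hx hy]; rewrite !mxE.
  by case: eqP => // e; move: h; rewrite e off_refl.
rewrite (off1_eq h) (off1_eq h').
move/eqP/restS_eqP: hx => hx; move/eqP/restS_eqP: hy => hy.
by rewrite !hx ?hy ?inE.
Qed.

Lemma Dk_hproj k : hproj (Dk k).
Proof.
split.
  apply/matrixP => x y; rewrite adjE !mxE conjC_nat eq_sym.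
  by case: eqP => [->|].
apply/matrixP => x y; rewrite !mxE (bigD1 x) //= big1 ?addr0 => [|u hu].
  rewrite !mxE eqxx /=; case: eqP => [->|_] /=; case: (qbit _ k);
  by rewrite /= ?mulr1n ?mulr0n ?mulr1 ?mulr0.
by rewrite !mxE eq_sym (negbTE hu) mul0r.
Qed.

End Dk.

Section Spec.
Variable R : realType.
Local Notation C := (R[i]).

Local Open Scope sesquilinear_scope.
Lemma adj_tc m p (A : 'M[C]_(m, p)) : adj A = A ^t*.
Proof. by []. Qed.

Lemma char_poly_conj m (A P P' : 'M[C]_m) : P' *m P = 1%:M ->
  char_poly (P' *m A *m P) = char_poly A.
Proof.
move=> hP.
have hmap : map_mx polyC P' *m map_mx polyC P = 1%:M.
  by rewrite -map_mxM hP map_mx1.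
have e : char_poly_mx (P' *m A *m P) =
  map_mx polyC P' *m char_poly_mx A *m map_mx polyC P.
  rewrite /char_poly_mx mulmxBr mulmxBl !map_mxM ?mulmxA.
  congr (_ - _); rewrite mul_mx_scalar -scalemxAl hmap.
  by rewrite scalemx1.
by rewrite /char_poly e !det_mulmx mulrAC -det_mulmx hmap det1 mul1r.
Qed.

Lemma char_poly_diag m (d : 'rV[C]_m) :
  char_poly (diag_mx d) = \prod_(i < m) ('X - (d 0 i)%:P).
Proof.
rewrite char_poly_trig ?diag_mx_is_trig //.
by apply: eq_bigr => i _; rewrite mxE eqxx mulr1n.
Qed.

End Spec.

Section Spec2.
Variable R : realType.
Local Notation C := (R[i]).
Local Open Scope sesquilinear_scope.

Lemma spec_herm m (D : 'M[C]_m) : adj D = D ->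
  let P := spectralmx D in let l := spectral_diag D in
  [/\ adj P *m P = 1%:M, P *m adj P = 1%:M, D = adj P *m diag_mx l *m P
    & forall i, l 0 i \is Num.real].
Proof.
move=> hD P l.
have hn : D \is normalmx by apply/normalmxP; rewrite -adj_tc hD.
have /orthomx_spectralP hD' := hn.
have hu := spectral_unitarymx D.
have hPP : P *m adj P = 1%:M by apply/unitarymxP.
have hPP' : adj P *m P = 1%:M by apply: mulmx1C.
have hDe : D = adj P *m diag_mx l *m P.
  by rewrite {1}hD' invmx_unitary.
split => // i.
have hdl : diag_mx l = P *m D *m adj P.
  by rewrite hDe !mulmxA hPP mul1mx -mulmxA hPP mulmx1.
have : adj (diag_mx l) = diag_mx l by rewrite hdl !adjM adjK hD mulmxA.
move/matrixP => /(_ i i); rewrite adjE !mxE eqxx !mulr1n => e.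
by rewrite CrealE e.
Qed.

Lemma prod_seq m (d : 'I_m -> C) :
  \prod_(i < m) ('X - (d i)%:P) =
  \prod_(x <- [seq d i | i <- index_enum 'I_m]) ('X - x%:P).
Proof. by rewrite big_map. Qed.

Lemma sum_seq m (d : 'I_m -> C) (F : C -> C) :
  \sum_(i < m) F (d i) = \sum_(x <- [seq d i | i <- index_enum 'I_m]) F x.
Proof. by rewrite big_map. Qed.

Lemma sum_sqrt_spec m (D : 'M[C]_m) : adj D = D ->
  \sum_i sqrtC (spectral_diag (adj D *m D) 0 i) =
  \sum_i `|spectral_diag D 0 i|.
Proof.
move=> hD.
have [hPP' hPP hDe hreal] := spec_herm hD.
set P := spectralmx D in hPP' hPP hDe; set l := spectral_diag D in hDe hreal *.
set B := adj D *m D.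
have hB : adj B = B by rewrite /B adjM adjK.
have [hQQ' hQQ hBe _] := spec_herm hB.
set Q := spectralmx B in hQQ' hQQ hBe; set s := spectral_diag B in hBe *.
set l2 : 'rV[C]_m := \row_i (l 0 i ^+ 2).
have hdd : diag_mx l *m diag_mx l = diag_mx l2.
  apply/matrixP => i j; rewrite mul_mx_diag !mxE.
  by case: eqP => [->|_]; rewrite ?mulr1n ?mulr0n ?mul0r // expr2.
have hB2 : B = adj P *m diag_mx l2 *m P.
  rewrite /B hD {1 2}hDe !mulmxA -(mulmxA _ P) hPP mulmx1.
  by rewrite -(mulmxA (adj P)) hdd.
have hc : char_poly (diag_mx s) = char_poly (diag_mx l2).
  have e : adj Q *m diag_mx s *m Q = adj P *m diag_mx l2 *m P.
    by rewrite -hB2.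
  by rewrite -(char_poly_conj (diag_mx s) hQQ') e char_poly_conj.
rewrite !char_poly_diag !prod_seq in hc.
have hp := prod_XsubC_eq hc.
rewrite (sum_seq (fun i => s 0 i) sqrtC) (perm_big _ hp) -sum_seq.
apply: eq_bigr => i _; rewrite mxE -real_normK ?hreal // sqrCK //.
Qed.

End Spec2.

Section TrBound.
Variable R : realType.
Local Notation C := (R[i]).

Lemma tr_mul_diag m (E : 'M[C]_m) (l : 'rV[C]_m) :
  \tr (E *m diag_mx l) = \sum_i E i i * l 0 i.
Proof. by rewrite mul_mx_diag /mxtrace; apply: eq_bigr => i _; rewrite mxE. Qed.

Lemma tr_bound m (D Q : 'M[C]_m) : adj D = D -> \tr D = 0 -> hproj Q ->
  \tr (Q *m D) + \tr (Q *m D) <=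
  \sum_i sqrtC (spectral_diag (adj D *m D) 0 i).
Proof.
move=> hD htr hQ; rewrite sum_sqrt_spec //.
have [hPP' hPP hDe hreal] := spec_herm hD.
set P := spectralmx D in hPP' hPP hDe; set l := spectral_diag D in hDe hreal *.
set E := P *m Q *m adj P.
have hE : hproj E by apply: hproj_conj.
have htrQD : \tr (Q *m D) = \sum_i E i i * l 0 i.
  rewrite hDe !mulmxA mxtrace_mulC !mulmxA -tr_mul_diag.
  rewrite /E; reflexivity.
have hsum : \sum_i l 0 i = 0.
  have e : \tr D = \sum_i l 0 i.
    by rewrite {1}hDe mxtrace_mulC mulmxA hPP mul1mx mxtrace_diag.
  by rewrite -e.
rewrite htrQD -big_split /=.
have -> : \sum_i (E i i * l 0 i + E i i * l 0 i) =
          \sum_i ((E i i + E i i - 1) * l 0 i + l 0 i).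
  by apply: eq_bigr => i _; rewrite mulrBl mul1r mulrDl addrNK.
rewrite big_split /= hsum addr0.
apply: ler_sum => i _.
have hx0 := hproj_diag_ge0 i hE; have hx1 := hproj_diag_le1 i hE.
have hxr : E i i \is Num.real by apply: ger0_real.
have hr : (E i i + E i i - 1) * l 0 i \is Num.real.
  by apply: realM; [apply: realB; [apply: realD|] |]; rewrite ?hreal.
apply: (le_trans (real_ler_norm hr)); rewrite normrM.
rewrite -[X in _ <= X]mul1r; apply: ler_wpM2r => //.
rewrite real_ler_norml; last by apply: realB; [apply: realD|].
apply/andP; split.
  by rewrite lerBrDr addNr addr_ge0.
by rewrite lerBlDr lerD.
Qed.

Lemma Re_le (z w : C) : z <= w -> complex.Re z <= complex.Re w.
Proof. by rewrite lecE => /andP[]. Qed.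

Lemma tr_bound_R m (D Q : 'M[C]_m) : adj D = D -> \tr D = 0 -> hproj Q ->
  complex.Re (\tr (Q *m D)) <= trnorm D / 2.
Proof.
move=> hD htr hQ; have := Re_le (tr_bound hD htr hQ).
rewrite /trnorm; move: (\tr (Q *m D)) => t.
case: t => a b /= h.
rewrite ler_pdivlMr // mulr_natr mulr2n //.
Qed.

End TrBound.

Section Entropy.
Variable R : realType.

Lemma ln_prod (I : finType) (F : I -> R) : (forall i, 0 < F i) ->
  ln (\prod_i F i) = \sum_i ln (F i).
Proof.
move=> hF.
have : 0 < \prod_i F i /\ ln (\prod_i F i) = \sum_i ln (F i).
  apply: (big_rec2 (fun y1 y2 => 0 < y1 /\ ln y1 = y2)).
    by rewrite ln1.
  move=> i y1 y2 _ [h1 h2]; split; first by rewrite mulr_gt0.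
  by rewrite lnM ?posrE // h2.
by case.
Qed.

Lemma ln_le_sub1 (x : R) : 0 < x -> ln x <= x - 1.
Proof.
move=> hx; have h : -1 < x - 1 by lra.
have e : 1 + (x - 1) = x by lra.
by have := le_ln1Dx h; rewrite e.
Qed.

Lemma sum_unbits n (V : nmodType) (F : 'I_(2 ^ n) -> V) :
  \sum_x F x = \sum_(f : {ffun 'I_n -> bool}) F (unbits f).
Proof.
rewrite (reindex (@unbits n)) //; exists (@bits n) => [f _|x _].
  by rewrite unbitsK.
by rewrite bitsK.
Qed.

Definition hb (t : R) := - (t * ln t) - (1 - t) * ln (1 - t).

Variable n : nat.
Variables (p : 'I_(2 ^ n) -> R) (t : 'I_n -> R) (Mr : R).
Hypotheses (hM : 0 < Mr) (hp0 : forall x, 0 <= p x) (hp1 : \sum_x p x = 1)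
  (hpM : forall x, p x <= Mr^-1) (ht0 : forall k, 0 <= t k)
  (ht1 : forall k, t k <= 1 - t k)
  (hq : forall k, \sum_x (if qbit x k then p x else 0) <= t k).

Let fk k (b : bool) := if b then t k else 1 - t k.
Let r (x : 'I_(2 ^ n)) := \prod_k fk k (qbit x k).

Let q k := \sum_x (if qbit x k then p x else 0).

Lemma fk_ge0 k b : 0 <= fk k b.
Proof. by rewrite /fk; case: b => //; have := ht1 k; have := ht0 k; lra. Qed.

Lemma r_sum : \sum_x r x = 1.
Proof.
rewrite sum_unbits.
under eq_bigr => f _ do (rewrite /r; under eq_bigr => k _ do rewrite qbit_unbits).
rewrite -(bigA_distr_bigA (fun k b => fk k b)).
by rewrite big1 // => k _; rewrite big_bool /fk /=; lra.
Qed.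

Lemma r_pos x : 0 < p x -> 0 < r x.
Proof.
move=> hx; apply: prodr_gt0 => k _; rewrite /fk.
case: ifP => hb; last by have := ht1 k; have := ht0 k; lra.
have : p x <= q k.
  rewrite /q (bigD1 x) //= hb ler_wpDr //.
  by apply: sumr_ge0 => y _; case: ifP.
have := hq k; rewrite -/(q k); have := ht0 k; lra.
Qed.

Lemma gibbs : \sum_x p x * ln (r x) <= \sum_x p x * ln (p x).
Proof.
have : \sum_x (p x * ln (r x) - p x * ln (p x)) <= \sum_x (r x - p x).
  apply: ler_sum => x _.
  have [hx|hx] := eqVneq (p x) 0; first by rewrite hx !mul0r subr0 subr_ge0 prodr_ge0 // => k _; apply: fk_ge0.
  have hpx : 0 < p x by rewrite lt_neqAle eq_sym hx hp0.
  have hrx := r_pos hpx.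
  rewrite -mulrBr -ln_div ?posrE //.
  have := ln_le_sub1 (divr_gt0 hrx hpx) => h.
  have := ler_wpM2l (hp0 x) h; rewrite mulrBr mulrCA divff ?gt_eqF // mulr1 mulr1.
  by [].
have e : \sum_x (r x - p x) = 0 by rewrite sumrB r_sum hp1 subrr.
rewrite e sumrB => h; lra.
Qed.


Lemma fk_pos x k : 0 < p x -> 0 < fk k (qbit x k).
Proof.
move=> hx; rewrite /fk.
case: ifP => hb; last by have := ht1 k; have := ht0 k; lra.
have : p x <= q k.
  rewrite /q (bigD1 x) //= hb ler_wpDr //.
  by apply: sumr_ge0 => y _; case: ifP.
have := hq k; rewrite -/(q k); have := ht0 k; lra.
Qed.

Lemma ent_lower : ln Mr <= - \sum_x p x * ln (p x).
Proof.
have h : \sum_x p x * ln (p x) <= \sum_x p x * (- ln Mr).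
  apply: ler_sum => x _.
  have [hx|hx] := eqVneq (p x) 0; first by rewrite hx !mul0r.
  have hpx : 0 < p x by rewrite lt_neqAle eq_sym hx hp0.
  apply: ler_wpM2l => //; rewrite -lnV ?posrE // ler_ln ?posrE ?invr_gt0 //.
rewrite -mulr_suml hp1 mul1r in h; lra.
Qed.

Lemma cross : \sum_x p x * ln (r x) =
  \sum_k (q k * ln (t k) + (1 - q k) * ln (1 - t k)).
Proof.
transitivity (\sum_x \sum_k p x * ln (fk k (qbit x k))).
  apply: eq_bigr => x _.
  have [hx|hx] := eqVneq (p x) 0.
    by rewrite hx mul0r big1 // => k _; rewrite mul0r.
  have hpx : 0 < p x by rewrite lt_neqAle eq_sym hx hp0.
  by rewrite /r ln_prod ?mulr_sumr // => k; apply: fk_pos.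
rewrite exchange_big; apply: eq_bigr => k _.
have hc : \sum_x (if qbit x k then 0 else p x) = 1 - q k.
  rewrite -hp1 /q -sumrB; apply: eq_bigr => x _.
  by case: ifP => _; rewrite ?subr0 ?subrr ?sub0r ?opprK //; lra.
rewrite -hc /q !mulr_suml -big_split /=; apply: eq_bigr => x _.
by rewrite /fk; case: ifP => _; rewrite ?mul0r ?add0r ?addr0.
Qed.

Lemma per_k k : - (q k * ln (t k) + (1 - q k) * ln (1 - t k)) <= hb (t k).
Proof.
rewrite /hb.
have hqt : q k <= t k by apply: hq.
have hln : ln (t k) <= ln (1 - t k).
  have [h0|h0] := eqVneq (t k) 0.
    by rewrite h0 subr0 ln1 ln0.
  have htp : 0 < t k by rewrite lt_neqAle eq_sym h0 ht0.
  rewrite ler_ln ?posrE //; have := ht1 k; lra.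
have h1 : 0 <= t k - q k by rewrite subr_ge0.
have h2 : 0 <= ln (1 - t k) - ln (t k) by rewrite subr_ge0.
have := mulr_ge0 h1 h2.
set a := ln (t k); set b := ln (1 - t k).
move=> h; nra.
Qed.

Lemma entropy_main : ln Mr <= \sum_k hb (t k).
Proof.
apply: (le_trans ent_lower).
have g := gibbs.
have : - \sum_x p x * ln (r x) <= \sum_k hb (t k).
  rewrite cross -sumrN; apply: ler_sum => k _; exact: per_k.
lra.
Qed.

End Entropy.

Section States.
Variable R : realType.
Local Notation C := (R[i]).

Lemma Re_add (a b : C) : complex.Re (a + b) = complex.Re a + complex.Re b.
Proof. by case: a; case: b. Qed.

Lemma Re_sum (I : finType) (F : I -> C) :
  complex.Re (\sum_i F i) = \sum_i complex.Re (F i).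
Proof.
apply: (big_morph (fun z : C => complex.Re z)) => //.
exact: Re_add.
Qed.

Lemma Re_realC (r : R) : complex.Re ((r%:C)%C : C) = r.
Proof. by []. Qed.

Lemma trnormN m (A : 'M[C]_m) : trnorm (- A) = trnorm A.
Proof.
rewrite /trnorm; have -> : adj (- A) *m - A = adj A *m A; last by [].
have -> : adj (- A) = - adj A.
  by apply/matrixP => i j; rewrite !adjE !mxE rmorphN.
by rewrite mulmxN mulNmx opprK.
Qed.

Variable n M : nat.
Variable phi : 'I_M -> 'cV[C]_(2 ^ n).
Hypothesis hM : (0 < M)%N.
Hypothesis hon : orthonormal_vecs phi.

Definition Gs : 'M[C]_(2 ^ n) := \sum_i proj (phi i).

Lemma adj_proj (v : 'cV[C]_(2 ^ n)) : adj (proj v) = proj v.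
Proof. by rewrite /proj adjM adjK. Qed.

Lemma adj_sum m (F : 'I_M -> 'M[C]_m) : adj (\sum_i F i) = \sum_i adj (F i).
Proof.
apply/matrixP => a b; rewrite adjE !summxE rmorph_sum /=.
by apply: eq_bigr => i _; rewrite adjE.
Qed.

Lemma Gs_hproj : hproj Gs.
Proof.
split.
  by rewrite /Gs adj_sum; apply: eq_bigr => i _; rewrite adj_proj.
rewrite /Gs mulmx_suml; apply: eq_bigr => i _.
rewrite mulmx_sumr (bigD1 i) //= big1 ?addr0 => [|j hj].
  by rewrite /proj mulmxA -(mulmxA (phi i)) hon eqxx mulmx1.
by rewrite /proj mulmxA -(mulmxA (phi i)) hon eq_sym (negbTE hj) mul_mx_scalar scale0r mul0mx.
Qed.

Lemma Gamma_Gs : Gamma phi = (M%:R)^-1 *: Gs.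
Proof. by []. Qed.

Lemma adj_scale m p (c : C) (A : 'M[C]_(m, p)) : adj (c *: A) = c^* *: adj A.
Proof. by apply/matrixP => i j; rewrite /adj !mxE rmorphM. Qed.

Lemma adj_Gamma : adj (Gamma phi) = Gamma phi.
Proof.
rewrite Gamma_Gs adj_scale (proj1 Gs_hproj); congr (_ *: _).
by rewrite rmorphV ?unitfE ?pnatr_eq0 -?lt0n // rmorph_nat.
Qed.

Lemma tr_proj1 (v : 'cV[C]_(2 ^ n)) : adj v *m v = 1%:M -> \tr (proj v) = 1.
Proof. by move=> h; rewrite /proj mxtrace_mulC h mxtrace1. Qed.

Lemma tr_Gamma : \tr (Gamma phi) = 1.
Proof.
rewrite Gamma_Gs mxtraceZ /Gs raddf_sum /=.
rewrite (eq_bigr (fun _ => 1)) => [|i _]; last first.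
  by apply: tr_proj1; rewrite hon eqxx.
by rewrite sumr_const card_ord mulVf // pnatr_eq0 -lt0n.
Qed.

End States.

Section Misc.
Variable R : realType.
Local Notation C := (R[i]).
Variable n : nat.

Lemma tr_Dk (k : 'I_n) (Y : 'M[C]_(2 ^ n)) :
  \tr (@Dk R n k *m Y) = \sum_x (if qbit x k then Y x x else 0).
Proof.
rewrite /mxtrace; apply: eq_bigr => x _; rewrite mxE (bigD1 x) //= big1 => [|y hy].
  by rewrite mxE eqxx /= addr0; case: (qbit x k); rewrite ?mul1r ?mul0r.
by rewrite mxE eq_sym (negbTE hy) mul0r.
Qed.

Lemma tr_Dz (k : 'I_n) : \tr (@Dk R n k *m proj (zero_state R n)) = 0.
Proof.
rewrite tr_Dk big1 // => x _; case: ifP => // hb.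
rewrite /proj mxE big_ord1 adjE !mxE.
have -> : (val x == 0%N) = false.
  by apply/negbTE; apply: contraTneq hb => e; rewrite /qbit e /bitn div0n.
by rewrite mul0r.
Qed.

Lemma adjB m p (A B : 'M[C]_(m, p)) : adj (A - B) = adj A - adj B.
Proof. by apply/matrixP => i j; rewrite !adjE !mxE rmorphB. Qed.

Lemma trB m (A B : 'M[C]_m) : \tr (A - B) = \tr A - \tr B.
Proof. by rewrite raddfB. Qed.

Lemma Re0 : complex.Re (0 : C) = 0. Proof. by []. Qed.
Lemma Re1 : complex.Re (1 : C) = 1. Proof. by []. Qed.

Lemma ReVn (M : nat) : complex.Re ((M%:R : C)^-1) = (M%:R : R)^-1.
Proof.
by rewrite -(rmorph_nat (@real_complex R)) -fmorphV.
Qed.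

End Misc.

Section Key.
Variable R : realType.
Local Notation C := (R[i]).
Variables (n M d : nat) (psi : 'cV[C]_(2 ^ n)) (phi : 'I_M -> 'cV[C]_(2 ^ n)).
Hypotheses (hpsi : unit_vector psi) (hM : (0 < M)%N) (hon : orthonormal_vecs phi).
Hypothesis hyp : forall S : {set 'I_n}, (#|S| <= d)%N ->
     trnorm (ptrace S (proj psi) - ptrace S (Gamma phi)) < 1 /\
     n%:R * H2 (trnorm (ptrace S (proj psi) - ptrace S (Gamma phi)) / 2)
       < log2 (M%:R : R).

Variable c : seq (seq (gate R n)).
Hypotheses (hc : all (@valid_layer R n) c) (hrun : run c = psi)
  (hd : (2 ^ size c <= d)%N).

Let W := Wmx c.
Let hW : W *m adj W = 1%:M := Wmx_unitary hc.
Let hW' : adj W *m W = 1%:M := Wmx_unitary' hc.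
Let z := zero_state R n.

Lemma psiW : psi = W *m z.
Proof. by rewrite -hrun run_Wmx. Qed.

Let Y := adj W *m Gamma phi *m W.
Let Pi := adj W *m Gs phi *m W.

Lemma hPi : hproj Pi.
Proof.
have := @hproj_conj R _ (Gs phi) (adj W); rewrite adjK; apply => //.
exact: Gs_hproj.
Qed.

Lemma hYPi : Y = (M%:R)^-1 *: Pi.
Proof. by rewrite /Y /Pi Gamma_Gs -scalemxAr -scalemxAl. Qed.

Definition pr (x : 'I_(2 ^ n)) : R := complex.Re (Y x x).

Lemma Yxx_ge0 x : 0 <= Y x x.
Proof.
rewrite hYPi mxE; apply: mulr_ge0; first by rewrite invr_ge0 ler0n.
exact: hproj_diag_ge0 hPi.
Qed.

Lemma Yxx_le x : Y x x <= (M%:R)^-1.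
Proof.
rewrite hYPi mxE -[X in _ <= X]mulr1; apply: ler_wpM2l.
  by rewrite invr_ge0 ler0n.
exact: hproj_diag_le1 hPi.
Qed.

Lemma pr_ge0 x : 0 <= pr x.
Proof. by rewrite /pr -Re0; apply: Re_le; apply: Yxx_ge0. Qed.

Lemma pr_le x : pr x <= (M%:R)^-1.
Proof. by rewrite /pr -ReVn; apply: Re_le; apply: Yxx_le. Qed.

Lemma pr_sum : \sum_x pr x = 1.
Proof.
rewrite /pr -Re_sum.
have -> : \sum_x Y x x = \tr Y by [].
by rewrite /Y mxtrace_mulC mulmxA hW mul1mx tr_Gamma.
Qed.


Let Pk k := W *m Dk R k *m adj W.

Lemma Pk_hproj k : hproj (Pk k).
Proof. by apply: hproj_conj => //; apply: Dk_hproj. Qed.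

Lemma Pk_cone k : exists T : {set 'I_n}, local T (Pk k) /\ (#|T| <= d)%N.
Proof.
have [T [h1 h2]] := cone hc (Dk_local R k).
exists T; split => //; apply: (leq_trans h2).
by rewrite cards1 muln1.
Qed.

Lemma key_false : False.
Proof.
have [Tf hTf] := boolp.choice Pk_cone.
pose eps k := trnorm (ptrace (Tf k) (proj psi) - ptrace (Tf k) (Gamma phi)).
pose t k := eps k / 2.
have hqk : forall k, \sum_x (if qbit x k then pr x else 0) <= t k.
  move=> k; have [hloc hcard] := hTf k.
  set T := Tf k.
  set Q := block T (Pk k).
  have hPE : Pk k = embed T Q := local_embedE hloc.
  have hQ : hproj Q.
    have [ha hi] := Pk_hproj k; split.
      by apply: (@embed_inj R n T); rewrite -embed_adj -hPE ha.
    by apply: (@embed_inj R n T); rewrite -embedM -hPE hi.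
  set D := ptrace T (Gamma phi - proj psi).
  have hDadj : adj D = D.
    by rewrite /D ptrace_adj adjB adj_Gamma // adj_proj.
  have hDtr : \tr D = 0.
    by rewrite /D tr_ptrace trB tr_Gamma // tr_proj1 ?subrr.
  have hb := tr_bound_R hDadj hDtr hQ.
  have heps : trnorm D = eps k by rewrite /D ptraceB -trnormN opprB.
  have e2 : \tr (Pk k *m proj psi) = 0.
    rewrite psiW /proj adjM /Pk.
    have -> : W *m Dk R k *m adj W *m (W *m z *m (adj z *m adj W)) =
              W *m (Dk R k *m (z *m adj z)) *m adj W.
      by rewrite !mulmxA -(mulmxA (W *m Dk R k) (adj W) W) hW' mulmx1.
    by rewrite mxtrace_mulC (mulmxA (adj W)) hW' mul1mx tr_Dz.
  have hq : \sum_x (if qbit x k then pr x else 0) = complex.Re (\tr (Q *m D)).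
    transitivity (complex.Re (\sum_x (if qbit x k then Y x x else 0))).
      by rewrite Re_sum; apply: eq_bigr => x _; case: ifP.
    rewrite -tr_Dk.
    have -> : \tr (Dk R k *m Y) = \tr (Pk k *m Gamma phi).
      by rewrite /Y /Pk !mulmxA mxtrace_mulC !mulmxA.
    rewrite -[Gamma phi](subrK (proj psi)) mulmxDr mxtraceD e2 addr0 hPE tr_embed.
    by [].
  by rewrite hq; apply: (le_trans hb); rewrite heps.
have hM' : 0 < (M%:R : R) by rewrite ltr0n.
have ht0 : forall k, 0 <= t k.
  move=> k; apply: le_trans (hqk k); apply: sumr_ge0 => x _.
  by case: ifP => // _; apply: pr_ge0.
have ht1 : forall k, t k <= 1 - t k.
  move=> k; have [hloc hcard] := hTf k; have := (hyp hcard).1.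
  rewrite -/(eps k) /t; lra.
have hent := entropy_main hM' pr_ge0 pr_sum pr_le ht0 ht1 hqk.
have hl2 : 0 < ln (2 : R) by apply: ln_gt0; lra.
have eH : forall u : R, H2 u = hb u / ln 2.
  by move=> u; rewrite /H2 /log2 /hb; field; rewrite ?lt0r_neq0.
have hlog : log2 (M%:R : R) <= \sum_k H2 (t k).
  rewrite /log2; under eq_bigr => k _ do rewrite eH.
  by rewrite -mulr_suml ler_wpM2r // invr_ge0 ltW.
have [hn0|hn] := posnP n.
  move: hlog; rewrite big1 => [hlog|k]; last first.
    by exfalso; have := ltn_ord k; move: (nat_of_ord k) => v; rewrite hn0.
  have h0 : (#|(finset.set0 : {set 'I_n})| <= d)%N by rewrite cards0.
  have hn0' : (n%:R : R) = 0 by rewrite hn0.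
  have := (hyp h0).2; rewrite hn0' mul0r => h.
  lra.
have hlt : \sum_k (n%:R * H2 (t k)) < \sum_(k < n) log2 (M%:R : R).
  apply: ltr_sum; first by apply/hasP; exists (Ordinal hn); rewrite ?mem_index_enum.
  by move=> k _; have [_ hcard] := hTf k; exact: (hyp hcard).2.
rewrite -mulr_sumr sumr_const card_ord -(mulr_natl (log2 _)) in hlt.
have := ler_wpM2l (ler0n _ n) hlog.
by move=> h; have := lt_le_trans hlt h; rewrite ltxx.
Qed.

End Key.

Unset Implicit Arguments.


Theorem proposition5 (R : realType) (n M d : nat)
  (psi : 'cV[R[i]]_(2 ^ n)) (phi : 'I_M -> 'cV[R[i]]_(2 ^ n)) :
  unit_vector psi ->
  (0 < M)%N ->
  orthonormal_vecs phi ->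
  (1 <= d)%N ->
  (forall S : {set 'I_n}, (#|S| <= d)%N ->
     trnorm (ptrace S (proj psi) - ptrace S (Gamma phi)) < 1 /\
     n%:R * H2 (trnorm (ptrace S (proj psi) - ptrace S (Gamma phi)) / 2)
       < log2 (M%:R : R)) ->
  ((log2 (d%:R : R))%:E < complexity psi)%E.
Proof.
move=> hpsi hM hon hd1 hyp.
set L0 := (trunc_log 2 d).+1.
have hpre : forall l, preparable_in psi l -> (L0 <= l)%N.
  move=> l [c [hs hc hr]]; rewrite leqNgt; apply/negP => hl.
  apply: (key_false hpsi hM hon hyp hc hr).
  apply: leq_trans (trunc_logP (isT : (1 < 2)%N) hd1).
  by rewrite leq_exp2l // hs -ltnS.
have hl2 : 0 < ln (2 : R) by apply: ln_gt0; lra.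
have hlog : log2 (d%:R : R) < L0%:R.
  have h2 : (0 : R) < 2 by lra.
  have e : ln (2 : R) *+ L0 = ln (2 ^+ L0) by rewrite lnXn.
  rewrite /log2 ltr_pdivrMr // mulr_natl e.
  rewrite ltr_ln ?posrE ?ltr0n ?exprn_gt0 //.
  by rewrite -natrX ltr_nat trunc_log_ltn.
apply: (@lt_le_trans _ _ (L0%:R)%:E); first by rewrite lte_fin.
rewrite /complexity; apply: le_ereal_inf_tmp => _ [l hl <-].
by rewrite lee_fin ler_nat; apply: hpre.
Qed.
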